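(* Let $e$ be a term, let $I,\tilde I$ be interpretations with $I=\tilde I$ on $\Sigma(e)$, and let $v,\tilde v$ be states with $v\downarrow CN(e)=\tilde v\downarrow CN(e)$ on $FV(e)$. Then $Iv[\![e]\!]=\tilde I\tilde v[\![e]\!]$. Moreover, $FV(e)$ and $CN(e)$ are the smallest sets with this property. That is, suppose $S\subseteq\mathcal V$ and $D\subseteq\Omega$ are such that for all $I$, $v$, $\tilde v$ with $v\downarrow D=\tilde v\downarrow D$ on $S$ we have $Iv[\![e]\!]=I\tilde v[\![e]\!]$. Then $FV(e)\subseteq S$ and $CN(e)\subseteq D$.
   Context: Setting (dLCHP). Variables and channels. Variables are $\mathcal V=\mathcal V_{\mathbb R}\cup\mathcal V_{\mathbb N}\cup\mathcal V_{\mathcal T}$ (real, integer and trace variables). Each $x\in\mathcal V_{\mathbb R}$ has a differential symbol $x'\in\mathcal V_{\mathbb R}$. The variable $\mu\in\mathcal V_{\mathbb R}$ is the designated global time. $\Omega$ is the set of channel names. All channel sets and variable sets occurring in the syntax are finite or cofinite. $S^\complement$ denotes the complement of $S$. Syntax of terms. Terms have four sorts: - real terms $\theta::=x\mid f(\bar{ch},\bar e)\mid\theta_1+\theta_2\mid\theta_1\cdot\theta_2\mid(\eta)'\mid\mathrm{val}(te)\mid\mathrm{time}(te)$; - integer terms $\iota::=n\mid f(\bar{ch},\bar e)\mid\iota_1+\iota_2\mid|te|$; - channel terms $f(\bar{ch},\bar e)\mid\mathrm{chan}(te)$; - trace terms $te::=h\mid f(\bar{ch},\bar e)\mid\langle ch,\eta_1,\eta_2\rangle\mid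 te_1\cdot te_2\mid te\downarrow C\mid te[\iota]$. Here $\eta,\eta_i$ are polynomials with rational coefficients in real variables. $f(\bar{ch},\bar e)$ is a function symbol (including constants) annotated with a channel set $\bar{ch}\subseteq\Omega$ and applied to terms $\bar e$. Operators such as $+,\cdot,\downarrow C$ are built-in. Traces and states. - A trace is a finite sequence of events $\langle ch,d,s\rangle$ with $ch\in\Omega$, $d\in\mathbb R$ (value) and $s\in\mathbb R$ (timestamp), with strictly increasing timestamps. - A state $v$ maps each variable to a value of its type (real, natural number or trace). $v[z\mapsto d]$ is the modified state. - $\tau\downarrow C$ is the subsequence of events whose channel lies in $C$. - $v\downarrow C$ replaces $v(h)$ by $v(h)\downarrow C$ for every $h\in\mathcal V_{\mathcal T}$. - ''$v\downarrow D=\tilde v\downarrow D$ on $S$'' means that $v\downarrow D$ and $\tilde v\downarrow D$ agree on every variable in $S$. Interpretations. An interpretation $I$ assigns to function symbols functions of matching sorts (smooth in real arguments if real-valued) and to predicate symbols relations. Term semantics. - Variables: $Iv[\![z]\!]=v(z)$. - Function symbols: $Iv[\![f(\bar{ch},e_1,\dots,e_k)]\!]=I(f)(I\tilde v[\![e_1]\!],\dots,I\tilde v[\![e_k]\!])$ where $\tilde v=v\downarrow\bar{ch}$. - Built-ins (sum, product, $\mathrm{val}$, $\mathrm{time}$, $\mathrm{chan}$, length, concatenation, projection, indexing, communication items) are evaluated pointwise. - Differentials: $Iv[\![(\eta)']\!]=\sum_x v(x')\,\partial Iv[\![\eta]\!]/\partial x$. Static semantics. - $FV(e)$ is the set of $z\in\mathcal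 V$ such that some $I,v,\tilde v$ with $v=\tilde v$ on $\{z\}^\complement$ satisfy $Iv[\![e]\!]\ne I\tilde v[\![e]\!]$. - $CN(e)$ is the set of $ch\in\Omega$ such that some $I,v,\tilde v$ with $v\downarrow\{ch\}^\complement=\tilde v\downarrow\{ch\}^\complement$ satisfy $Iv[\![e]\!]\ne I\tilde v[\![e]\!]$. - $\Sigma(e)$ is the set of function symbols occurring in $e$. *)

(* Defs.v *)
From Stdlib Require List.
From HB Require Import structures.
From mathcomp Require Import all_boot all_order all_algebra.
From mathcomp Require Import all_classical all_reals all_analysis.
Set Implicit Arguments. Unset Strict Implicit. Unset Printing Implicit Defensive.
Import Order.TTheory GRing.Theory Num.Theory.
Import numFieldNormedType.Exports.
Local Open Scope classical_set_scope.
Local Open Scope ring_scope.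

Definition chan := nat.

(* Real variables: (base name, number of primes); the differential
   symbol x' of x is obtained by adding one prime. *)
Definition rvar := (nat * nat)%type.
Definition dsym (x : rvar) : rvar := (x.1, x.2.+1).
(* designated global time variable mu (plays no role in terms) *)
Definition mu : rvar := (0%N, 0%N).

Inductive dvar := VR of rvar | VN of nat | VT of nat.

Inductive chset := ChFin of seq chan | ChCofin of seq chan.
Definition chset_set (C : chset) : set chan :=
  match C with
  | ChFin l => [set c | c \in l]
  | ChCofin l => [set c | c \notin l]
  end.

Inductive dpoly :=
| PVar of rvar
| PConst of rat
| PAdd of dpoly & dpoly
| PMul of dpoly & dpoly.

Fixpoint pvars (p : dpoly) : seq rvar :=
  match p with
  | PVar x => [:: x]
  | PConst _ => [::]
  | PAdd p q | PMul p q => pvars p ++ pvars q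
  end.

Inductive tsort := SR | SN | SC | ST.

Record fsym := FSym { fname : nat; fargs : seq tsort; fres : tsort }.

Inductive dterm : tsort -> Type :=
| TVar   : rvar -> dterm SR
| TFun   : forall f : fsym, chset -> targs (fargs f) -> dterm (fres f)
| TPlus  : dterm SR -> dterm SR -> dterm SR
| TMult  : dterm SR -> dterm SR -> dterm SR
| TDiff  : dpoly -> dterm SR
| TVal   : dterm ST -> dterm SR
| TTime  : dterm ST -> dterm SR
| TNVar  : nat -> dterm SN
| TNPlus : dterm SN -> dterm SN -> dterm SN
| TLen   : dterm ST -> dterm SN
| TChan  : dterm ST -> dterm SC
| TTVar  : nat -> dterm ST
| TComm  : chan -> dpoly -> dpoly -> dterm ST
| TConc  : dterm ST -> dterm ST -> dterm ST
| TProj  : dterm ST -> chset -> dterm ST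
| TAt    : dterm ST -> dterm SN -> dterm ST
with targs : seq tsort -> Type :=
| ANil  : targs [::]
| ACons : forall s ss, dterm s -> targs ss -> targs (s :: ss).

Fixpoint syms s (e : dterm s) {struct e} : list fsym :=
  match e with
  | TVar _ | TDiff _ | TNVar _ | TTVar _ | TComm _ _ _ => nil
  | TFun f _ a => f :: syms_args a
  | TPlus e1 e2 | TMult e1 e2 | TNPlus e1 e2 | TConc e1 e2 => syms e1 ++ syms e2
  | TVal e1 | TTime e1 | TLen e1 | TChan e1 | TProj e1 _ => syms e1
  | TAt e1 e2 => syms e1 ++ syms e2
  end
with syms_args ss (a : targs ss) {struct a} : list fsym :=
  match a with
  | ANil => nil
  | ACons _ _ e a' => syms e ++ syms_args a'
  end.

Definition Sigma s (e : dterm s) : set fsym := [set f | List.In f (syms e)].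

Section Semantics.
Variable R : realType.

Definition event := (chan * R * R)%type.
Definition ev_chan (e : event) : chan := e.1.1.
Definition ev_val (e : event) : R := e.1.2.
Definition ev_time (e : event) : R := e.2.
Definition ev0 : event := (0%N, 0, 0).

(* semantic values of traces are finite event sequences; traces proper
   are the chronological ones (strictly increasing timestamps). *)
Definition trace := seq event.
Definition chrono (tr : trace) : Prop :=
  sorted (fun a b : event => ev_time a < ev_time b) tr.

Definition tproj (C : set chan) (tr : trace) : trace :=
  seq.filter (fun ev => `[< C (ev_chan ev) >]) tr.

Definition sval (s : tsort) : Type :=
  match s with SR => R | SN => nat | SC => chan | ST => trace end.

Fixpoint vals (ss : seq tsort) : Type :=
  match ss with [::] => unit | s :: ss' => (sval s * vals ss')%type end.

Record dstate := State {
  sR : rvar -> R;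
  sN : nat -> nat;
  sT : nat -> trace }.

Definition valid_state (v : dstate) : Prop := forall h, chrono (sT v h).

Definition sproj (C : set chan) (v : dstate) : dstate :=
  State (sR v) (sN v) (fun h => tproj C (sT v h)).

Definition agree (S : set dvar) (v w : dstate) : Prop :=
  forall z, S z ->
    match z with
    | VR x => sR v x = sR w x
    | VN n => sN v n = sN w n
    | VT h => sT v h = sT w h
    end.

Definition agree_on (D : set chan) (S : set dvar) (v w : dstate) : Prop :=
  agree S (sproj D v) (sproj D w).

Definition dinterp := forall f : fsym, vals (fargs f) -> sval (fres f).

Fixpoint iterD k (ds : seq 'rV[R]_k) (g : 'rV[R]_k -> R) : 'rV[R]_k -> R :=
  match ds with
  | [::] => g
  | d :: ds' => fun x => derive (iterD ds' g) x d
  end.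

Definition smooth k (g : 'rV[R]_k -> R) : Prop :=
  forall ds : seq 'rV[R]_k,
    continuous (iterD ds g) /\ (forall x d, derivable (iterD ds g) x d).

Fixpoint nreal (ss : seq tsort) : nat :=
  match ss with
  | [::] => 0%N
  | SR :: ss' => (nreal ss').+1
  | _ :: ss' => nreal ss'
  end.

(* replace the real arguments (numbered among the real positions) *)
Fixpoint setreals (ss : seq tsort) : vals ss -> (nat -> R) -> vals ss :=
  match ss return vals ss -> (nat -> R) -> vals ss with
  | [::] => fun a _ => a
  | s :: ss' =>
    match s return vals (s :: ss') -> (nat -> R) -> vals (s :: ss') with
    | SR => fun a r => (r 0%N, setreals a.2 (fun i => r i.+1))
    | SN => fun a r => (a.1, setreals a.2 r)
    | SC => fun a r => (a.1, setreals a.2 r)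
    | ST => fun a r => (a.1, setreals a.2 r)
    end
  end.

Definition rv_fun k (x : 'rV[R]_k) : nat -> R :=
  fun i => oapp (fun j : 'I_k => x ord0 j) 0 (insub i).

Definition valid_interp (I : dinterp) : Prop :=
  (forall (f : fsym) (H : fres f = SR) (a : vals (fargs f)),
     smooth (fun x : 'rV[R]_(nreal (fargs f)) =>
               eq_rect _ sval (I f (setreals a (rv_fun x))) _ H)) /\
  (forall (f : fsym) (H : fres f = ST) (a : vals (fargs f)),
     chrono (eq_rect _ sval (I f a) _ H)).

Definition upd (r : rvar -> R) (x : rvar) (t : R) : rvar -> R :=
  fun y => if y == x then t else r y.

Fixpoint peval (r : rvar -> R) (p : dpoly) : R :=
  match p with
  | PVar x => r x
  | PConst q => ratr q
  | PAdd p q => peval r p + peval r q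
  | PMul p q => peval r p * peval r q
  end.

Fixpoint sem (I : dinterp) (v : dstate) s (e : dterm s) {struct e} : sval s :=
  match e in dterm s return sval s with
  | TVar x => sR v x
  | TFun f C a => I f (sem_args I (sproj (chset_set C) v) a)
  | TPlus e1 e2 => sem I v e1 + sem I v e2
  | TMult e1 e2 => sem I v e1 * sem I v e2
  | TDiff p =>
      \sum_(x <- undup (pvars p))
         sR v (dsym x) * derive1 (fun t => peval (upd (sR v) x t) p) (sR v x)
  | TVal te => match sem I v te with [:: ev] => ev_val ev | _ => 0 end
  | TTime te => match sem I v te with [:: ev] => ev_time ev | _ => 0 end
  | TNVar n => sN v n
  | TNPlus e1 e2 => (sem I v e1 + sem I v e2)%N
  | TLen te => size (sem I v te)
  | TChan te => match sem I v te with [:: ev] => ev_chan ev | _ => 0%N end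
  | TTVar h => sT v h
  | TComm c p1 p2 => [:: (c, peval (sR v) p1, peval (sR v) p2)]
  | TConc e1 e2 => sem I v e1 ++ sem I v e2
  | TProj te C => tproj (chset_set C) (sem I v te)
  | TAt te i =>
      let tr := sem I v te in
      let n := sem I v i in
      if (n < size tr)%N then [:: nth ev0 tr n] else [::]
  end
with sem_args (I : dinterp) (v : dstate) ss (a : targs ss) {struct a} : vals ss :=
  match a in targs ss return vals ss with
  | ANil => tt
  | ACons _ _ e a' => (sem I v e, sem_args I v a')
  end.

Definition FV s (e : dterm s) : set dvar :=
  [set z | exists (I : dinterp) (v w : dstate),
     [/\ valid_interp I, valid_state v, valid_state w,
         agree (~` [set z]) v w & sem I v e <> sem I w e]].

Definition CN s (e : dterm s) : set chan :=
  [set c | exists (I : dinterp) (v w : dstate),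
     [/\ valid_interp I, valid_state v, valid_state w,
         agree setT (sproj (~` [set c]) v) (sproj (~` [set c]) w)
       & sem I v e <> sem I w e]].

End Semantics.

(* Main.v *)
Require Import Defs.
From HB Require Import structures.
From mathcomp Require Import all_boot all_order all_algebra.
From mathcomp Require Import all_classical all_reals all_analysis.
Set Implicit Arguments. Unset Strict Implicit. Unset Printing Implicit Defensive.
Import Order.TTheory GRing.Theory Num.Theory.
Local Open Scope classical_set_scope.
Local Open Scope ring_scope.

Scheme dterm_mind := Induction for dterm Sort Prop
  with targs_mind := Induction for targs Sort Prop.

Fixpoint vars s (e : dterm s) {struct e} : list dvar :=
  match e with
  | TVar x => [:: VR x]
  | TFun _ _ a => vars_args a
  | TPlus e1 e2 | TMult e1 e2 | TNPlus e1 e2 | TConc e1 e2 => (vars e1 ++ vars e2)%list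
  | TDiff p => (map VR (pvars p) ++ map (fun x => VR (dsym x)) (pvars p))%list
  | TVal e1 | TTime e1 | TLen e1 | TChan e1 | TProj e1 _ => vars e1
  | TNVar n => [:: VN n]
  | TTVar h => [:: VT h]
  | TComm _ p1 p2 => map VR (pvars p1 ++ pvars p2)%list
  | TAt e1 e2 => (vars e1 ++ vars e2)%list
  end
with vars_args ss (a : targs ss) {struct a} : list dvar :=
  match a with
  | ANil => nil
  | ACons _ _ e a' => (vars e ++ vars_args a')%list
  end.

Lemma in_cat_iff (T : Type) (x : T) (s1 s2 : seq T) :
  List.In x (s1 ++ s2) <-> List.In x s1 \/ List.In x s2.
Proof. elim: s1 => [|a s IH] /=; first by tauto. rewrite IH; tauto. Qed.

Section S.
Variable R : realType.

Definition agz (z : dvar) (v w : dstate R) : Prop :=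
  match z with
  | VR x => sR v x = sR w x
  | VN n => sN v n = sN w n
  | VT h => sT v h = sT w h
  end.

Lemma peval_eq (r r' : rvar -> R) p :
  (forall x, List.In x (pvars p) -> r x = r' x) -> peval r p = peval r' p.
Proof.
elim: p => [x|q|p IHp q IHq|p IHp q IHq] /= H.
- by apply: H; left.
- by [].
- rewrite IHp ?IHq // => x Hx; apply: H; rewrite in_cat_iff; tauto.
- rewrite IHp ?IHq // => x Hx; apply: H; rewrite in_cat_iff; tauto.
Qed.

Lemma in_undup_pvars (x : rvar) p : x \in undup (pvars p) -> List.In x (pvars p).
Proof.
rewrite mem_undup; elim: (pvars p) => //= a s IH.
rewrite in_cons => /orP [/eqP ->|/IH]; tauto.
Qed.

Lemma agz_sproj C z (v w : dstate R) : agz z v w -> agz z (sproj C v) (sproj C w).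
Proof. by case: z => //= h ->. Qed.

Lemma sem_struct s (e : dterm s) :
  forall (I It : dinterp R) (v w : dstate R),
  (forall f, List.In f (syms e) -> I f = It f) ->
  (forall z, List.In z (vars e) -> agz z v w) ->
  sem I v e = sem It w e.
Proof.
pose P s (e : dterm s) := forall (I It : dinterp R) (v w : dstate R),
  (forall f, List.In f (syms e) -> I f = It f) ->
  (forall z, List.In z (vars e) -> agz z v w) ->
  sem I v e = sem It w e.
pose Q ss (a : targs ss) := forall (I It : dinterp R) (v w : dstate R),
  (forall f, List.In f (syms_args a) -> I f = It f) ->
  (forall z, List.In z (vars_args a) -> agz z v w) ->
  sem_args I v a = sem_args It w a.
move: s e; apply: (@dterm_mind P Q); rewrite /P /Q /=.
- by move=> x I It v w _ H; apply: (H (VR x)); left.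
- move=> f C a IH I It v w Hs Hv.
  rewrite (Hs f); last by left.
  congr (It f _); apply: IH => [g Hg|z Hz]; first by apply: Hs; right.
  by apply: agz_sproj; apply: Hv.
- move=> e1 IH1 e2 IH2 I It v w Hs Hv.
  rewrite (IH1 I It v w) ?(IH2 I It v w) // => z Hz;
  (apply: Hs || apply: Hv); rewrite in_cat_iff; tauto.
- move=> e1 IH1 e2 IH2 I It v w Hs Hv.
  rewrite (IH1 I It v w) ?(IH2 I It v w) // => z Hz;
  (apply: Hs || apply: Hv); rewrite in_cat_iff; tauto.
- move=> p I It v w _ Hv.
  apply: eq_big_seq => x /in_undup_pvars Hx.
  have Ex : forall y, List.In y (pvars p) -> sR v y = sR w y.
    move=> y Hy; apply: (Hv (VR y)); apply/in_cat_iff; left; exact: List.in_map.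
  have Ed : sR v (dsym x) = sR w (dsym x).
    apply: (Hv (VR (dsym x))); apply/in_cat_iff; right.
    exact: (List.in_map (fun x => VR (dsym x))).
  rewrite Ed Ex //; congr (_ * _); congr (derive1 _ _).
  apply: funext => t; apply: peval_eq => y Hy; rewrite /upd.
  by case: (y == x) => //; apply: Ex.
- by move=> e1 IH I It v w Hs Hv; rewrite (IH I It v w).
- by move=> e1 IH I It v w Hs Hv; rewrite (IH I It v w).
- by move=> n I It v w _ H; apply: (H (VN n)); left.
- move=> e1 IH1 e2 IH2 I It v w Hs Hv.
  rewrite (IH1 I It v w) ?(IH2 I It v w) // => z Hz;
  (apply: Hs || apply: Hv); rewrite in_cat_iff; tauto.
- by move=> e1 IH I It v w Hs Hv; rewrite (IH I It v w).
- by move=> e1 IH I It v w Hs Hv; rewrite (IH I It v w).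
- by move=> h I It v w _ H; apply: (H (VT h)); left.
- move=> c p1 p2 I It v w _ Hv.
  have Ex : forall y, List.In y (pvars p1 ++ pvars p2)%list -> sR v y = sR w y.
    by move=> y Hy; apply: (Hv (VR y)); exact: List.in_map.
  rewrite (@peval_eq (sR v) (sR w) p1) ?(@peval_eq (sR v) (sR w) p2) // => y Hy;
  apply: Ex; apply/List.in_app_iff; tauto.
- move=> e1 IH1 e2 IH2 I It v w Hs Hv.
  rewrite (IH1 I It v w) ?(IH2 I It v w) // => z Hz;
  (apply: Hs || apply: Hv); rewrite in_cat_iff; tauto.
- by move=> e1 IH C I It v w Hs Hv; rewrite (IH I It v w).
- move=> e1 IH1 e2 IH2 I It v w Hs Hv.
  rewrite (IH1 I It v w) ?(IH2 I It v w) // => z Hz;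
  (apply: Hs || apply: Hv); rewrite ?in_cat_iff ?List.in_app_iff; tauto.
- by [].
- move=> s0 ss e1 IH1 a IH2 I It v w Hs Hv.
  rewrite (IH1 I It v w) ?(IH2 I It v w) // => z Hz;
  (apply: Hs || apply: Hv); rewrite ?in_cat_iff ?List.in_app_iff; tauto.
Qed.

Lemma sem_agz (I : dinterp R) (v w : dstate R) s (e : dterm s) :
  (forall z, agz z v w) -> sem I v e = sem I w e.
Proof. by move=> H; apply: sem_struct. Qed.

Lemma tproj_chrono (C : set chan) (t : trace R) : chrono t -> chrono (tproj C t).
Proof. by apply: sorted_filter => a b c; apply: lt_trans. Qed.

Lemma sproj_valid C (v : dstate R) : valid_state v -> valid_state (sproj C v).
Proof. by move=> H h; apply: tproj_chrono. Qed.

Lemma tproj_sub (D C : set chan) (t : trace R) :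
  D `<=` C -> tproj D (tproj C t) = tproj D t.
Proof.
move=> sub; rewrite /tproj -filter_predI; apply: eq_filter => ev /=.
by case: (asboolP (D _)) => //= /sub Hc; rewrite asboolT.
Qed.

Lemma tproj_comp (A B C : set chan) (t : trace R) :
  (forall c, C c <-> A c /\ B c) -> tproj A (tproj B t) = tproj C t.
Proof.
move=> H; rewrite /tproj -filter_predI; apply: eq_filter => ev /=.
by rewrite -asbool_and; apply: asbool_equiv_eq; rewrite H.
Qed.

Lemma chan_chain s (e : dterm s) (I : dinterp R) : valid_interp I ->
  forall cs : seq chan, (forall c, c \in cs -> ~ CN R e c) ->
  forall u, valid_state u -> sem I u e = sem I (sproj [set c | c \notin cs] u) e.
Proof.
move=> vI; elim=> [|c cs IH] Hcs u vu.
  apply: sem_agz => -[x|n|h] //=; rewrite /tproj.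
  by rewrite (@eq_filter _ _ predT) ?filter_predT // => ev; rewrite asboolT.
have Hc : ~ CN R e c by apply: Hcs; rewrite in_cons eqxx.
have E1 : sem I u e = sem I (sproj (~` [set c]) u) e.
  apply: contrapT => hne; apply: Hc.
  exists I, u, (sproj (~` [set c]) u); split => //; first exact: sproj_valid.
  by move=> -[x|n|h] _ //=; rewrite tproj_sub.
rewrite E1 IH; last exact: sproj_valid.
- apply: sem_agz => -[x|n|h] //=; apply: tproj_comp => c' /=.
  rewrite in_cons negb_or; split; first by move/andP=> [/eqP ? ->].
  by move=> [-> /eqP ->].
- by move=> c' Hc'; apply: Hcs; rewrite in_cons Hc' orbT.
Qed.

Definition mix (l : list dvar) (u w : dstate R) : dstate R :=
  State (fun x => if `[< List.In (VR x) l >] then sR w x else sR u x)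
        (fun n => if `[< List.In (VN n) l >] then sN w n else sN u n)
        (fun h => if `[< List.In (VT h) l >] then sT w h else sT u h).

Lemma mix_in l u w z : List.In z l -> agz z (mix l u w) w.
Proof. by case: z => [x|n|h] H /=; rewrite asboolT. Qed.

Lemma mix_out l u w z : ~ List.In z l -> agz z (mix l u w) u.
Proof. by case: z => [x|n|h] H /=; rewrite asboolF. Qed.

Lemma agz_trans z (a b c : dstate R) : agz z a b -> agz z b c -> agz z a c.
Proof. by case: z => /= ? -> ->. Qed.
Lemma agz_sym z (a b : dstate R) : agz z a b -> agz z b a.
Proof. by case: z => /= ? ->. Qed.

Lemma mix_valid l u w : valid_state u -> valid_state w -> valid_state (mix l u w).
Proof. by move=> vu vw h /=; case: ifP. Qed.

Lemma fv_chain s (e : dterm s) (I : dinterp R) (u w : dstate R) :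
  valid_interp I -> valid_state u -> valid_state w ->
  forall l, (forall z, List.In z l -> FV R e z -> agz z u w) ->
  sem I u e = sem I (mix l u w) e.
Proof.
move=> vI vu vw; elim=> [|a l IH] Hl.
  by apply: sem_agz => z; apply: agz_sym; apply: mix_out.
rewrite IH; last by move=> z Hz; apply: Hl; right.
have ag : forall z, z <> a -> agz z (mix l u w) (mix (a :: l) u w).
  move=> z za; case: (pselect (List.In z l)) => Hz.
    apply: agz_trans (mix_in _ _ Hz) _; apply: agz_sym; apply: mix_in; by right.
  have Hz' : ~ List.In z (a :: l) by move=> [E|H']; [apply: za; rewrite E | exact: Hz].
  apply: agz_trans (mix_out _ _ Hz) _; apply: agz_sym; exact: mix_out.
case: (pselect (FV R e a)) => Ha.
  apply: sem_agz => z; case: (pselect (z = a)) => [->|za]; last exact: ag.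
  have Haw := mix_in u w (or_introl (erefl a) : List.In a (a :: l)).
  case: (pselect (List.In a l)) => Hal.
    by apply: agz_trans (mix_in _ _ Hal) _; apply: agz_sym.
  apply: agz_trans (mix_out _ _ Hal) _; apply: agz_trans (agz_sym Haw).
  by apply: Hl => //; left.
apply: contrapT => hne; apply: Ha.
exists I, (mix l u w), (mix (a :: l) u w); split => //; try exact: mix_valid.
Qed.

Lemma in_flatten_map (T : Type) (f : T -> seq nat) (l : list T) z x :
  List.In z l -> x \in f z -> x \in flatten (map f l).
Proof.
elim: l => //= a l IH [->|Hz] Hx; rewrite mem_cat ?Hx //.
by rewrite IH ?orbT.
Qed.

End S.

Theorem lemma2 (R : realType) (s : tsort) (e : dterm s) :
  (forall (I It : dinterp R) (v vt : dstate R),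
     valid_interp I -> valid_interp It ->
     valid_state v -> valid_state vt ->
     (forall f, Sigma e f -> I f = It f) ->
     agree_on (CN R e) (FV R e) v vt ->
     sem I v e = sem It vt e) /\
  (forall (S : set dvar) (D : set chan),
     (forall (I : dinterp R) (v vt : dstate R),
        valid_interp I -> valid_state v -> valid_state vt ->
        agree_on D S v vt -> sem I v e = sem I vt e) ->
     FV R e `<=` S /\ CN R e `<=` D).
Proof.
split.
- move=> I It v vt vI vIt vv vvt HS Hag.
  pose chof z := match z with VT h => map (@ev_chan R) (sT v h ++ sT vt h) | _ => [::] end.
  pose allch := flatten (map chof (vars e)).
  pose cs := [seq c <- allch | ~~ `[< CN R e c >]].
  have Hcs : forall c, c \in cs -> ~ CN R e c.
    by move=> c; rewrite mem_filter => /andP [/asboolPn].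
  have Eproj : forall (u : dstate R), (forall h, List.In (VT h) (vars e) ->
      forall ev, ev \in sT u h -> ev_chan ev \in allch) ->
      sem I (sproj [set c | c \notin cs] u) e = sem I (sproj (CN R e) u) e.
    move=> u Hu; apply: sem_struct => // -[x|n|h] Hz //=.
    apply: eq_in_filter => ev Hev /=.
    rewrite /cs mem_filter (Hu h Hz ev Hev) andbT negbK asboolb.
    by case: (asboolP (CN R e _)).
  have Htr : forall u, valid_state u -> (u = v \/ u = vt) ->
      sem I u e = sem I (sproj (CN R e) u) e.
    move=> u vu Hu; rewrite -Eproj; first exact: chan_chain.
    move=> h Hh ev Hev; apply: (in_flatten_map (f := chof) Hh) => /=.
    by apply: map_f; rewrite mem_cat; case: Hu => <-; rewrite Hev ?orbT.
  rewrite (Htr v vv (or_introl erefl)).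
  rewrite (@fv_chain _ _ e I (sproj (CN R e) v) (sproj (CN R e) vt) vI
     (sproj_valid _ vv) (sproj_valid _ vvt) (vars e)); last first.
    by move=> z _ Hz; apply: Hag.
  rewrite (@sem_struct _ _ e I I _ (sproj (CN R e) vt)) //; last first.
    by move=> z Hz; apply: mix_in.
  rewrite -(Htr vt vvt (or_intror erefl)).
  apply: sem_struct => [f Hf|z _]; first exact: HS.
  by case: z.
- move=> S D H; split.
  + move=> z [I [v [w [vI vv vw hag hne]]]].
    case: (pselect (S z)) => // nS; exfalso; apply: hne; apply: H => //.
    move=> z' Sz'; have nz : (~` [set z]) z' by move=> /= E; apply: nS; rewrite -E.
    by move: (hag z' nz); case: z' {Sz' nz} => //= h ->.
  + move=> c [I [v [w [vI vv vw hag hne]]]].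
    case: (pselect (D c)) => // nD; exfalso; apply: hne; apply: H => //.
    move=> z' _; move: (hag z' ltac:(by [])); case: z' => //= h E.
    rewrite -(@tproj_sub _ D (~` [set c])) ?E ?tproj_sub //;
    by move=> c' Dc' /= E'; apply: nD; rewrite -E'.
Qed.
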